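(* Let $h\ge 2$ be an integer and let $O$ be a finite set of next hops with $\delta=|O|$ and probability distribution $(p_o)_{o\in O}$, with entropy $H_O=\sum_{o\in O} p_o\log_2\frac{1}{p_o}$. Let $T$ be the complete binary trie of height $h$ whose $2^h$ leaves are labeled independently with next hop $o$ with probability $p_o$, let $D$ be the DAG obtained from $T$ by trie-folding, and let $V^j_D$ be the set of nodes of $D$ at level $j$. For $1\le j\le h$ put $\beta_j=\min\{\frac{H_O}{h-j}2^h+3,\,2^{h-j},\,\delta^{2^j}\}$ (with the first term $+\infty$ for $j=h$), let $k^*\in\{1,\dots,h\}$ be a level at which $\beta_j$ attains its maximum, and suppose each node of $D$ is stored using $2(h-k^* )$ bits. Then the expected number of bits needed to store the nodes of $D$ (at levels $1,\dots,h$), namely $2(h-k^* )\sum_{j=1}^h E(|V^j_D|)$, is at most \[2 h H_O 2^{h} + 6h^2.\]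
   Context: Levels: the level of a node of $T$ is $h$ minus its distance from the root; the root has level $h$, leaves level $0$, and level $j$ has $2^{h-j}$ nodes, each the root of a subtrie of height $j$ with $2^j$ labeled leaves. Trie-folding merges nodes whose rooted subtries are identical (same structure and same leaf next-hop labels), producing a DAG $D$; the nodes of $D$ at level $j$ correspond to the distinct leaf-label strings of length $2^j$ among the $2^{h-j}$ level-$j$ subtries. Each node of $D$ stores two child pointers of $h-k^*$ bits each. *)

(* Defs.v *)
From HB Require Import structures.
From mathcomp Require Import all_boot all_order all_algebra.
From mathcomp Require Import all_classical all_reals.
From mathcomp Require Import exp.
Set Implicit Arguments. Unset Strict Implicit. Unset Printing Implicit Defensive.
Import Order.TTheory GRing.Theory Num.Theory.
Local Open Scope ring_scope.

Definition log2 {R : realType} (x : R) : R := ln x / ln 2.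

(* Shannon entropy H_O = sum_o p_o log2 (1/p_o); terms with p_o = 0 vanish
   since 0^-1 = 0 and ln 0 = 0 in MathComp(-Analysis). *)
Definition entropy {R : realType} {O : finType} (p : O -> R) : R :=
  \sum_(o : O) p o * log2 (p o)^-1.

(* leaf labels of the complete binary trie of height h, left to right *)
Definition leaves {O : finType} {h : nat} (f : {ffun 'I_(2 ^ h) -> O}) : seq O :=
  [seq f i | i <- enum 'I_(2 ^ h)].

(* leaf-label string of the b-th level-j subtrie (2^j consecutive leaves) *)
Definition block {O : finType} {h : nat} (f : {ffun 'I_(2 ^ h) -> O}) (j b : nat)
  : seq O := take (2 ^ j) (drop (b * 2 ^ j) (leaves f)).

(* |V^j_D| : number of nodes of the folded DAG D at level j = number of
   distinct leaf-label strings among the 2^(h-j) level-j subtries *)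
Definition nodes_at_level {O : finType} {h : nat} (f : {ffun 'I_(2 ^ h) -> O})
  (j : nat) : nat :=
  size (undup [seq block f j b | b <- iota 0 (2 ^ (h - j))]).

Definition prob_lab {R : realType} {O : finType} {h : nat} (p : O -> R)
  (f : {ffun 'I_(2 ^ h) -> O}) : R := \prod_(i : 'I_(2 ^ h)) p (f i).

Definition exp_nodes {R : realType} {O : finType} (h : nat) (p : O -> R) (j : nat)
  : R := \sum_(f : {ffun 'I_(2 ^ h) -> O}) prob_lab p f * (nodes_at_level f j)%:R.

Definition beta {R : realType} {O : finType} (h : nat) (p : O -> R) (j : nat) : R :=
  if j == h then Num.min (2 ^+ (h - j)) ((#|O| ^ (2 ^ j))%:R)
  else Num.min (entropy p / (h - j)%:R * 2 ^+ h + 3)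
               (Num.min (2 ^+ (h - j)) ((#|O| ^ (2 ^ j))%:R)).

(* Main.v *)
Require Import Defs.
From HB Require Import structures.
From mathcomp Require Import all_boot all_order all_algebra.
From mathcomp Require Import all_classical all_reals.
From mathcomp Require Import exp.
From mathcomp Require Import ring lra zify.
Import Order.TTheory GRing.Theory Num.Theory.
Local Open Scope ring_scope.

Lemma sum_prod {R : realType} {O I : finType} (p : O -> R) (G : I -> O -> R) :
  \sum_(f : {ffun I -> O}) \prod_i (p (f i) * G i (f i)) = \prod_i \sum_o p o * G i o.
Proof. by rewrite (bigA_distr_bigA (fun i o => p o * G i o)). Qed.

Lemma sum_prob1 {R : realType} {O I : finType} (p : O -> R) :
  \sum_(o : O) p o = 1 ->
  \sum_(f : {ffun I -> O}) \prod_i p (f i) = 1.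
Proof.
move=> s1.
transitivity (\sum_(f : {ffun I -> O}) \prod_i (p (f i) * (fun (_ : I) (_ : O) => (1 : R)) i (f i))).
  by apply: eq_bigr => f _; apply: eq_bigr => i _; rewrite mulr1.
rewrite (sum_prod p (fun (_ : I) (_ : O) => (1 : R))); apply: big1 => i _.
by rewrite -[RHS]s1; apply: eq_bigr => o _; rewrite mulr1.
Qed.

Lemma reindex_prod {R : realType} {N n s : nat} (H : nat -> R) : (s + n <= N)%N ->
  \prod_(i < N) (if (s <= i)%N && (i < s + n)%N then H (i - s)%N else 1)
  = \prod_(0 <= k < n) H k.
Proof.
move=> le.
rewrite -(big_mkord xpredT (fun i => if (s <= i)%N && (i < s + n)%N then H (i - s)%N else 1)).
rewrite (big_cat_nat (n := s)) //=; try lia.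
rewrite [X in _ * X](big_cat_nat (n := s + n)) //=; try lia.
rewrite [X in X * _]big1_seq ?mul1r; last first.
  move=> i; rewrite mem_index_iota => h; case: ifP => // /andP[h1 _]; lia.
rewrite [X in _ * X]big1_seq ?mulr1; last first.
  move=> i; rewrite mem_index_iota => h; case: ifP => // /andP[_ h1]; lia.
rewrite -{1}(add0n s) big_addn addKn.
apply: eq_big_nat => i /andP[_ hi].
have -> : ((s <= i + s) && (i + s < s + n))%N by apply/andP; split; lia.
by rewrite addnK.
Qed.

Lemma nth_leaves {O : finType} {h : nat} (f : {ffun 'I_(2 ^ h) -> O}) (o0 : O) (i : 'I_(2 ^ h)) :
  nth o0 (leaves f) i = f i.
Proof. by rewrite /leaves (nth_map i) ?size_enum_ord // nth_ord_enum. Qed.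

Lemma size_leaves {O : finType} {h : nat} (f : {ffun 'I_(2 ^ h) -> O}) :
  size (leaves f) = (2 ^ h)%N.
Proof. by rewrite /leaves size_map size_enum_ord. Qed.

Lemma pow_split {h j : nat} : (j <= h)%N -> (2 ^ h = 2 ^ (h - j) * 2 ^ j)%N.
Proof. by move=> hj; rewrite -expnD subnK. Qed.

Lemma blk_bound {h j b : nat} : (j <= h)%N -> (b < 2 ^ (h - j))%N ->
  (b * 2 ^ j + 2 ^ j <= 2 ^ h)%N.
Proof.
move=> hj hb; rewrite (pow_split hj) -mulSnr; apply: leq_mul => //.
Qed.

Lemma size_block {O : finType} {h : nat} (f : {ffun 'I_(2 ^ h) -> O}) (j b : nat) :
  (j <= h)%N -> (b < 2 ^ (h - j))%N -> size (block f j b) = (2 ^ j)%N.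
Proof.
move=> hj hb; rewrite /block size_takel // size_drop size_leaves.
have := blk_bound hj hb; lia.
Qed.

Lemma nth_block {O : finType} {h : nat} (f : {ffun 'I_(2 ^ h) -> O}) (o0 : O) (j b k : nat) :
  (k < 2 ^ j)%N -> nth o0 (block f j b) k = nth o0 (leaves f) (b * 2 ^ j + k).
Proof. by move=> hk; rewrite /block nth_take // nth_drop. Qed.

Lemma block_eq {O : finType} {h : nat} (f : {ffun 'I_(2 ^ h) -> O}) (o0 : O) (j b : nat)
  (s : seq O) : (j <= h)%N -> (b < 2 ^ (h - j))%N -> size s = (2 ^ j)%N ->
  (block f j b == s) =
  all (fun k => nth o0 (leaves f) (b * 2 ^ j + k) == nth o0 s k) (iota 0 (2 ^ j)).
Proof.
move=> hj hb hs; apply/eqP/allP.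
  move=> <- k; rewrite mem_iota add0n => hk; by rewrite nth_block.
move=> H; apply: (eq_from_nth (x0 := o0)); first by rewrite size_block.
move=> k; rewrite size_block // => hk.
rewrite nth_block //; apply/eqP/H; by rewrite mem_iota.
Qed.

Lemma prod_nat_all {R : realType} (c : nat -> bool) (s : seq nat) :
  \prod_(k <- s) ((c k)%:R : R) = (all c s)%:R.
Proof.
elim: s => [|a s IH]; first by rewrite big_nil.
by rewrite big_cons IH /= -natrM mulnb.
Qed.

Definition Gind {O : finType} {R : realType} (o0 : O) (s : seq O) (st n : nat) (i : nat) (o : O) : R :=
  if (st <= i)%N && (i < st + n)%N then (o == nth o0 s (i - st)%N)%:R else 1.

Lemma ind_prod {R : realType} {O : finType} {h : nat} (f : {ffun 'I_(2 ^ h) -> O}) (o0 : O) (j b : nat)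
  (s : seq O) : (j <= h)%N -> (b < 2 ^ (h - j))%N -> size s = (2 ^ j)%N ->
  ((block f j b == s)%:R : R) = \prod_(i < 2 ^ h) Gind o0 s (b * 2 ^ j) (2 ^ j) i (f i).
Proof.
move=> hj hb hs.
rewrite (block_eq f o0) // -prod_nat_all.
have -> : iota 0 (2 ^ j) = index_iota 0 (2 ^ j) by rewrite /index_iota subn0.
rewrite -(reindex_prod _ (blk_bound hj hb)).
apply: eq_bigr => i _; rewrite /Gind; case: ifP => // /andP[h1 _].
by rewrite subnKC // nth_leaves.
Qed.

Lemma sum_pick {R : realType} {O : finType} (p : O -> R) (c : O) :
  \sum_o p o * ((o == c)%:R : R) = p c.
Proof.
rewrite (bigD1 c) //= eqxx mulr1 big1 ?addr0 // => o /negPf ->.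
by rewrite mulr0.
Qed.

Lemma marg_block {R : realType} {O : finType} {h : nat} (p : O -> R) (o0 : O) (j b : nat)
  (s : seq O) : \sum_o p o = 1 -> (j <= h)%N -> (b < 2 ^ (h - j))%N -> size s = (2 ^ j)%N ->
  \sum_(f : {ffun 'I_(2 ^ h) -> O}) prob_lab p f * ((block f j b == s)%:R : R)
  = \prod_(0 <= k < 2 ^ j) p (nth o0 s k).
Proof.
move=> s1 hj hb hs.
transitivity (\sum_(f : {ffun 'I_(2 ^ h) -> O})
   \prod_i (p (f i) * Gind o0 s (b * 2 ^ j) (2 ^ j) i (f i))).
  apply: eq_bigr => f _; by rewrite (ind_prod (R:=R) f o0) // /prob_lab big_split.
rewrite (sum_prod p (fun (i : 'I_(2 ^ h)) o => Gind (R:=R) o0 s (b * 2 ^ j) (2 ^ j) i o)) -(reindex_prod _ (blk_bound hj hb)).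
apply: eq_bigr => i _; rewrite /Gind; case: ifP => _.
  by rewrite sum_pick.
by rewrite -[RHS]s1; apply: eq_bigr => o _; rewrite mulr1.
Qed.

Lemma nth_codom {O : finType} {n : nat} (t : {ffun 'I_n -> O}) (o0 : O) (k : 'I_n) :
  nth o0 (codom t) k = t k.
Proof. by rewrite codomE (nth_map k) ?size_enum_ord // nth_ord_enum. Qed.

Definition Lf {O : finType} {h : nat} (f : {ffun 'I_(2 ^ h) -> O}) (j : nat) :=
  [seq block f j b | b <- iota 0 (2 ^ (h - j))].

Lemma D_le {O : finType} {h : nat} (f : {ffun 'I_(2 ^ h) -> O}) (o0 : O) (j : nat) :
  (j <= h)%N ->
  (nodes_at_level f j <= #|[pred t : {ffun 'I_(2 ^ j) -> O} | codom t \in Lf f j]|)%N.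
Proof.
move=> hj; rewrite /nodes_at_level cardE -(size_map (fun t : {ffun 'I_(2 ^ j) -> O} => codom t)).
apply: uniq_leq_size; first exact: undup_uniq.
move=> x; rewrite mem_undup => xin.
have : x \in Lf f j by [].
case/mapP: xin => b; rewrite mem_iota add0n => /andP[_ hb] xe.
set t := [ffun k : 'I_(2 ^ j) => nth o0 x k].
have ct : codom t = x.
  apply: (eq_from_nth (x0 := o0)); first by rewrite size_codom card_ord xe size_block.
  move=> k; rewrite size_codom card_ord => hk.
  by rewrite (nth_codom t o0 (Ordinal hk)) ffunE.
move=> xL; rewrite -ct; apply: map_f; by rewrite mem_enum inE ct.
Qed.

Lemma card_sum {R : realType} {T : finType} (P : pred T) :
  (#|P|%:R : R) = \sum_(t : T) ((P t)%:R : R).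
Proof.
rewrite -sum1_card natr_sum big_mkcond /=; apply: eq_bigr => t _.
by rewrite unfold_in; case: (P t).
Qed.

Lemma mem_count {T : eqType} {S : Type} (F : S -> T) (x : T) (s : seq S) :
  (((x \in map F s) : nat) <= count (fun b => F b == x) s)%N.
Proof.
elim: s => [|a s IH] //=; rewrite in_cons eq_sym.
case: (F a == x) => //=; lia.
Qed.

Definition qq {R : realType} {O : finType} {n : nat} (p : O -> R) (t : {ffun 'I_n -> O}) : R :=
  \prod_k p (t k).

Definition aa {R : realType} {O : finType} (h j : nat) (p : O -> R) (t : {ffun 'I_(2 ^ j) -> O}) : R :=
  \sum_(f : {ffun 'I_(2 ^ h) -> O}) prob_lab p f * ((codom t \in Lf f j)%:R).

Lemma prob_ge0 {R : realType} {O : finType} {h : nat} (p : O -> R) (f : {ffun 'I_(2 ^ h) -> O}) :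
  (forall o, 0 <= p o) -> 0 <= prob_lab p f.
Proof. by move=> p0; apply: prodr_ge0 => i _. Qed.

Lemma q_nth {R : realType} {O : finType} {n : nat} (p : O -> R) (o0 : O) (t : {ffun 'I_n -> O}) :
  qq p t = \prod_(0 <= k < n) p (nth o0 (codom t) k).
Proof. by rewrite big_mkord; apply: eq_bigr => k _; rewrite nth_codom. Qed.

Lemma exp_le_a {R : realType} {O : finType} (h j : nat) (p : O -> R) (o0 : O) :
  (forall o, 0 <= p o) -> (j <= h)%N ->
  exp_nodes h p j <= \sum_(t : {ffun 'I_(2 ^ j) -> O}) aa h j p t.
Proof.
move=> p0 hj; rewrite /exp_nodes /aa exchange_big /=.
apply: ler_sum => f _; rewrite -mulr_sumr; apply: ler_wpM2l; first exact: prob_ge0.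
rewrite -card_sum ler_nat; exact: D_le.
Qed.

Lemma a_ge0 {R : realType} {O : finType} (h j : nat) (p : O -> R) t :
  (forall o, 0 <= p o) -> 0 <= aa h j p t.
Proof. by move=> p0; apply: sumr_ge0 => f _; apply: mulr_ge0 => //; apply: prob_ge0. Qed.

Lemma a_le1 {R : realType} {O : finType} (h j : nat) (p : O -> R) t :
  (forall o, 0 <= p o) -> \sum_o p o = 1 -> aa h j p t <= 1.
Proof.
move=> p0 s1; rewrite -(sum_prob1 (I := 'I_(2 ^ h)) p s1).
apply: ler_sum => f _; rewrite -[X in _ <= X]mulr1; apply: ler_wpM2l; first exact: prob_ge0.
by case: (_ \in _).
Qed.

Lemma a_le_mq {R : realType} {O : finType} (h j : nat) (p : O -> R) (o0 : O) t :
  (forall o, 0 <= p o) -> \sum_o p o = 1 -> (j <= h)%N ->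
  aa h j p t <= (2 ^ (h - j))%:R * qq p t.
Proof.
move=> p0 s1 hj.
apply: (@le_trans _ _ (\sum_(b <- iota 0 (2 ^ (h - j)))
      \sum_(f : {ffun 'I_(2 ^ h) -> O}) prob_lab p f * ((block f j b == codom t)%:R))).
  rewrite /aa exchange_big /=; apply: ler_sum => f _.
  rewrite -mulr_sumr; apply: ler_wpM2l; first exact: prob_ge0.
  rewrite -natr_sum ler_nat -big_mkcond /= sum1_count.
  exact: mem_count.
rewrite big_seq.
under eq_bigr => b.
  rewrite mem_iota add0n => /andP[_ hb].
  rewrite (marg_block p o0 j b (codom t) s1 hj hb); last by rewrite size_codom card_ord.
  rewrite -(q_nth p o0).
  over.
rewrite -big_seq.
have -> : iota 0 (2 ^ (h - j)) = index_iota 0 (2 ^ (h - j)) by rewrite /index_iota subn0.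
by rewrite sumr_const_nat subn0 mulr_natl.
Qed.

Lemma ln_prod {R : realType} {I : finType} (F : I -> R) :
  (forall i, 0 < F i) -> ln (\prod_i F i) = \sum_i ln (F i).
Proof.
move=> F0.
suff : 0 < \prod_i F i /\ ln (\prod_i F i) = \sum_i ln (F i) by case.
apply: (big_rec2 (fun y1 y2 => 0 < y1 /\ ln y1 = y2)); first by rewrite ln1.
move=> i y1 y2 _ [y0 <-]; split; first by rewrite mulr_gt0.
by rewrite lnM ?posrE.
Qed.

Lemma marg1 {R : realType} {O : finType} {n : nat} (p : O -> R) (g : O -> R) (k0 : 'I_n) :
  \sum_o p o = 1 ->
  \sum_(t : {ffun 'I_n -> O}) qq p t * g (t k0) = \sum_o p o * g o.
Proof.
move=> s1.
pose G := fun (i : 'I_n) (o : O) => if i == k0 then g o else 1.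
transitivity (\sum_(t : {ffun 'I_n -> O}) \prod_i (p (t i) * G i (t i))).
  apply: eq_bigr => t _; rewrite big_split /= /qq; congr (_ * _).
  rewrite (bigD1 k0) //= /G eqxx big1 ?mulr1 // => i /negPf -> //.
rewrite (sum_prod p G) (bigD1 k0) //= [X in _ * X]big1 ?mulr1.
  by apply: eq_bigr => o _; rewrite /G eqxx.
move=> i /negPf ni; rewrite -[RHS]s1; apply: eq_bigr => o _; by rewrite /G ni mulr1.
Qed.

Lemma qlog {R : realType} {O : finType} {n : nat} (p : O -> R) (t : {ffun 'I_n -> O}) :
  (forall o, 0 <= p o) ->
  qq p t * log2 (qq p t)^-1 = \sum_k qq p t * log2 (p (t k))^-1.
Proof.
move=> p0.
case: (eqVneq (qq p t) 0) => [->|qn0].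
  by rewrite mul0r big1 // => k _; rewrite mul0r.
rewrite -mulr_sumr; congr (_ * _).
have pk : forall k, 0 < p (t k).
  move=> k; rewrite lt_def p0 andbT; apply: contraNneq qn0 => e.
  by rewrite /qq (bigD1 k) //= e mul0r.
have qp : 0 < qq p t by apply: prodr_gt0 => k _.
rewrite /log2 -mulr_suml; congr (_ * _).
rewrite lnV ?posrE // /qq ln_prod // -sumrN; apply: eq_bigr => k _.
by rewrite lnV ?posrE.
Qed.

Lemma str_entropy {R : realType} {O : finType} (n : nat) (p : O -> R) :
  (forall o, 0 <= p o) -> \sum_o p o = 1 ->
  \sum_(t : {ffun 'I_n -> O}) qq p t * log2 (qq p t)^-1 = n%:R * entropy p.
Proof.
move=> p0 s1.
under eq_bigr do rewrite qlog //.
rewrite exchange_big /=.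
under eq_bigr do rewrite (marg1 p (fun o => log2 (p o)^-1)) //.
by rewrite sumr_const card_ord mulr_natl.
Qed.

Lemma ln_le_sub1 {R : realType} {r : R} : 0 < r -> ln r <= r - 1.
Proof.
move=> r0; have := expR_ge1Dx (ln r); rewrite lnK ?posrE //; lra.
Qed.

Lemma ln2_ge (R : realType) : 1 / 2 <= ln (2 : R).
Proof.
have h1 : sequences.expR (1/2 : R) <= 2.
  have h := expR_ge1Dx (- (1/2) : R).
  have hp : 0 < sequences.expR (- (1/2) : R) by apply: expR_gt0.
  have := expRxMexpNx_1 (1/2 : R).
  nra.
rewrite -ler_ln ?posrE ?expR_gt0 // in h1.
by rewrite expRK in h1.
Qed.

Lemma key (R : realType) (L : nat) (q a : R) : (1 <= L)%N -> 0 <= q -> q <= 1/4 ->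
  0 <= a -> a <= 1 -> a <= 2 ^+ L * q ->
  L%:R * a * ln 2 <= 2 ^+ L * (q * ln q^-1).
Proof.
move=> L1 q0 q4 a0 a1 am.
have m0 : (0 : R) < 2 ^+ L by rewrite exprn_gt0.
have lm : ln (2 ^+ L : R) = L%:R * ln 2 by rewrite lnXn // mulr_natl.
have l2 := ln2_ge R.
case: (eqVneq q 0) => [q00|qn0]; first subst q.
  have -> : a = 0 by apply/eqP; rewrite eq_le a0 andbT; move: am; rewrite mulr0.
  by rewrite !(mulr0, mul0r).
have qp : 0 < q by rewrite lt_def qn0.
set m := (2 ^+ L : R) in m0 lm am *.
have L0 : (1 : R) <= L%:R by rewrite ler1n.
case: (leP (m * q) 1) => mq.
  have : ln m <= ln q^-1.
    rewrite ler_ln ?posrE ?invr_gt0 //.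
    by rewrite -(ler_pM2r qp) mulVf.
  rewrite lm => h.
  have : L%:R * ln 2 * a <= L%:R * ln 2 * (m * q).
    by apply: ler_wpM2l => //; apply: mulr_ge0; lra.
  have : m * q * (L%:R * ln 2) <= m * q * ln q^-1.
    apply: ler_wpM2l => //; apply: mulr_ge0; lra.
  nra.
set r := m * q in mq *.
have r0 : 0 < r by lra.
have qi : q^-1 = m / r by rewrite /r invfM mulrA mulfV ?mul1r //; lra.
have lnq : ln q^-1 = ln m - ln r by rewrite qi ln_div ?posrE.
have h4 : ln 4 + ln r <= ln m.
  rewrite -lnM ?posrE //; try lra.
  rewrite ler_ln ?posrE //; try lra.
  rewrite /r; nra.
have l4 : ln (4 : R) = 2 * ln 2.
  have -> : (4 : R) = 2 ^+ 2 by rewrite expr2; lra.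
  by rewrite lnXn // mulr_natl.
have lr := ln_le_sub1 r0.
have : L%:R * ln 2 * a <= L%:R * ln 2.
  rewrite -[X in _ <= X]mulr1; apply: ler_wpM2l => //; apply: mulr_ge0; lra.
rewrite -lm => h.
rewrite mulrA -/r lnq.
have : (r - 1) * (ln 4 + ln r) <= (r - 1) * ln m by apply: ler_wpM2l; lra.
nra.
Qed.

Lemma q_ge0 {R : realType} {O : finType} {n : nat} (p : O -> R) (t : {ffun 'I_n -> O}) :
  (forall o, 0 <= p o) -> 0 <= qq p t.
Proof. by move=> p0; apply: prodr_ge0. Qed.

Lemma q_le1 {R : realType} {O : finType} {n : nat} (p : O -> R) (t : {ffun 'I_n -> O}) :
  (forall o, 0 <= p o) -> \sum_o p o = 1 -> qq p t <= 1.
Proof.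
move=> p0 s1; rewrite -(sum_prob1 (I := 'I_n) p s1) (bigD1 t) //= -/(qq p t).
rewrite lerDl; apply: sumr_ge0 => u _; exact: q_ge0.
Qed.

Lemma count_big {R : realType} {O : finType} {n : nat} (p : O -> R) :
  (forall o, 0 <= p o) -> \sum_o p o = 1 ->
  \sum_(t : {ffun 'I_n -> O}) ((((1/4 < qq p t)%R : bool) : nat)%:R : R) <= 3.
Proof.
move=> p0 s1.
rewrite -natr_sum.
set k := (\sum_t _)%N.
have [t0 ht0|none] := pickP (fun t : {ffun 'I_n -> O} => 1/4 < qq p t); last first.
  suff -> : k = 0%N by rewrite ler0n.
  by rewrite /k big1 // => t _; rewrite none.
suff : (k%:R : R) / 4 < 1.
  move=> h; have : (k%:R : R) < 4%:R by lra.
  rewrite ltr_nat => hk; rewrite (_ : (3 : R) = 3%:R) // ler_nat; lia.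
rewrite /k natr_sum mulr_suml.
apply: (@lt_le_trans _ _ (\sum_(t : {ffun 'I_n -> O}) qq p t)); last first.
  by rewrite /qq (sum_prob1 (I := 'I_n) p s1).
rewrite [X in X < _](bigD1 t0) //= [X in _ < X](bigD1 t0) //=.
rewrite ht0 /=; apply: ltr_leD; first lra.
apply: ler_sum => t _.
have := q_ge0 p t p0; case: ltrP => /= h; lra.
Qed.

Lemma xlog_ge0 {R : realType} {x : R} : 0 <= x -> x <= 1 -> 0 <= x * log2 x^-1.
Proof.
move=> x0 x1; case: (eqVneq x 0) => [->|xn]; first by rewrite mul0r.
have xp : 0 < x by rewrite lt_def xn x0.
apply: mulr_ge0 => //; rewrite /log2; apply: divr_ge0.
  by apply: ln_ge0; rewrite invf_ge1.
by apply: ln_ge0; lra.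
Qed.

Lemma ln2_gt0 {R : realType} : 0 < ln (2 : R).
Proof. by apply: ln_gt0; lra. Qed.

Lemma per_t {R : realType} (L : nat) (q a : R) : (1 <= L)%N -> 0 <= q -> q <= 1 ->
  0 <= a -> a <= 1 -> a <= 2 ^+ L * q ->
  L%:R * a <= 2 ^+ L * (q * log2 q^-1) + L%:R * (a * (((1/4 < q)%R : bool) : nat)%:R).
Proof.
move=> L1 q0 q1 a0 a1 am.
have l2 := @ln2_gt0 R.
have m0 : (0 : R) < 2 ^+ L by rewrite exprn_gt0.
case: ltrP => hq /=.
  have := xlog_ge0 q0 q1.
  move=> h; rewrite mulr1; have : 0 <= 2 ^+ L * (q * log2 q^-1) by apply: mulr_ge0 => //; lra.
  lra.
rewrite mulr0 mulr0 addr0.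
have := @key R L q a L1 q0 hq a0 a1 am.
move=> h; rewrite /log2 -(ler_pM2r l2) !mulrA divfK ?gt_eqF //.
by rewrite !mulrA in h.
Qed.

Lemma level_ent {R : realType} {O : finType} (h j : nat) (p : O -> R) (o0 : O) :
  (forall o, 0 <= p o) -> \sum_o p o = 1 -> (j < h)%N ->
  exp_nodes h p j <= entropy p / (h - j)%:R * 2 ^+ h + 3.
Proof.
move=> p0 s1 hj.
have hj' : (j <= h)%N by apply: ltnW.
have L1 : (1 <= h - j)%N by rewrite subn_gt0.
have Lp : (0 : R) < (h - j)%:R by rewrite ltr0n.
apply: (le_trans (exp_le_a h j p o0 p0 hj')).
set Sa := \sum_t _.
have step : (h - j)%:R * Sa <=
   2 ^+ (h - j) * \sum_(t : {ffun 'I_(2 ^ j) -> O}) (qq p t * log2 (qq p t)^-1)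
   + (h - j)%:R * \sum_(t : {ffun 'I_(2 ^ j) -> O})
        (aa h j p t * (((1/4 < qq p t)%R : bool) : nat)%:R).
  rewrite /Sa !mulr_sumr -big_split /=; apply: ler_sum => t _.
  apply: per_t => //.
  - exact: q_ge0.
  - exact: q_le1.
  - exact: a_ge0.
  - exact: a_le1.
  - by rewrite -natrX; apply: a_le_mq.
have c3 : \sum_(t : {ffun 'I_(2 ^ j) -> O}) (aa h j p t * (((1/4 < qq p t)%R : bool) : nat)%:R) <= 3.
  apply: le_trans (count_big (n := 2 ^ j) p p0 s1); apply: ler_sum => t _.
  have := a_le1 h j p t p0 s1; have := a_ge0 h j p t p0.
  by case: (_ < _)%R => /=; rewrite ?mulr1 ?mulr0.
rewrite str_entropy // in step.
have e2 : (2 : R) ^+ h = 2 ^+ (h - j) * (2 ^ j)%:R by rewrite natrX -exprD subnK.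
rewrite -(ler_pM2l Lp).
have -> : (h - j)%:R * (entropy p / (h - j)%:R * 2 ^+ h + 3)
   = 2 ^+ (h - j) * ((2 ^ j)%:R * entropy p) + (h - j)%:R * 3.
  rewrite e2; field; lra.
have : (h - j)%:R * \sum_(t : {ffun 'I_(2 ^ j) -> O}) (aa h j p t * (((1/4 < qq p t)%R : bool) : nat)%:R)
   <= (h - j)%:R * 3 by rewrite ler_pM2l.
lra.
Qed.

Lemma exp_le_const {R : realType} {O : finType} (h j : nat) (p : O -> R) (c : nat) :
  (forall o, 0 <= p o) -> \sum_o p o = 1 ->
  (forall f : {ffun 'I_(2 ^ h) -> O}, nodes_at_level f j <= c)%N ->
  exp_nodes h p j <= c%:R.
Proof.
move=> p0 s1 hc; rewrite /exp_nodes.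
apply: (@le_trans _ _ (\sum_(f : {ffun 'I_(2 ^ h) -> O}) prob_lab p f * c%:R)).
  apply: ler_sum => f _; apply: ler_wpM2l; first exact: prob_ge0.
  by rewrite ler_nat.
by rewrite -mulr_suml /prob_lab (sum_prob1 (I := 'I_(2 ^ h)) p s1) mul1r.
Qed.

Lemma level_beta {R : realType} {O : finType} (h j : nat) (p : O -> R) (o0 : O) :
  (forall o, 0 <= p o) -> \sum_o p o = 1 -> (j <= h)%N ->
  exp_nodes h p j <= beta h p j.
Proof.
move=> p0 s1 hj.
have b1 : exp_nodes h p j <= 2 ^+ (h - j).
  rewrite -natrX; apply: exp_le_const => // f.
  rewrite /nodes_at_level; apply: leq_trans (size_undup _) _.
  by rewrite size_map size_iota.
have b2 : exp_nodes h p j <= (#|O| ^ 2 ^ j)%:R.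
  apply: exp_le_const => // f.
  apply: leq_trans (D_le f o0 j hj) _.
  have := max_card [pred t : {ffun 'I_(2 ^ j) -> O} | codom t \in Lf f j]; by rewrite card_ffun card_ord.
rewrite /beta; case: eqP => hh.
  by rewrite le_min b1 b2.
rewrite le_min le_min b1 b2 !andbT.
apply: (level_ent h j p o0) => //.
by rewrite ltn_neqAle hj andbT; apply/eqP.
Qed.

Lemma entropy_ge0 {R : realType} {O : finType} (p : O -> R) :
  (forall o, 0 <= p o) -> \sum_o p o = 1 -> 0 <= entropy p.
Proof.
move=> p0 s1; apply: sumr_ge0 => o _; apply: xlog_ge0 => //.
rewrite -s1 (bigD1 o) //= lerDl; exact: sumr_ge0.
Qed.

Theorem theorem1 (R : realType) (O : finType) (p : O -> R) (h kstar : nat) :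
  (2 <= h)%N ->
  (forall o, 0 <= p o) -> \sum_(o : O) p o = 1 ->
  (1 <= kstar <= h)%N ->
  (forall j : nat, (1 <= j <= h)%N -> beta h p j <= beta h p kstar) ->
  (2 * (h - kstar))%:R * \sum_(1 <= j < h.+1) exp_nodes h p j
    <= 2 * h%:R * entropy p * 2 ^+ h + 6 * (h ^ 2)%:R.
Proof.
move=> h2 p0 s1 /andP[k1 kh] hb.
have [o0 _|none] := pickP (fun _ : O => true); last first.
  have z : \sum_(o : O) p o = 0 by apply: big1 => o; rewrite none.
  by move: s1; rewrite z => /eqP; rewrite eq_sym oner_eq0.
have H0 := entropy_ge0 p p0 s1.
have e0 : (0 : R) <= 2 ^+ h by apply: exprn_ge0.
have hR : (0 : R) <= h%:R by [].
case: (eqVneq kstar h) => [->|kn].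
  rewrite subnn muln0 mul0r; apply: addr_ge0.
    apply: mulr_ge0 => //; apply: mulr_ge0 => //; apply: mulr_ge0 => //.
  by apply: mulr_ge0.
have klt : (kstar < h)%N by rewrite ltn_neqAle kn kh.
set K : R := (h - kstar)%:R.
have Kp : 0 < K by rewrite /K ltr0n subn_gt0.
have Kh : K <= h%:R by rewrite /K ler_nat leq_subr.
set C := entropy p / K * 2 ^+ h + 3.
have bC : forall j, (1 <= j <= h)%N -> exp_nodes h p j <= C.
  move=> j /andP[j1 jh]; apply: (le_trans (level_beta h j p o0 p0 s1 jh)).
  apply: (le_trans (hb j _)); first by rewrite j1 jh.
  rewrite /beta (negbTE kn) ge_min lexx //.
have S : \sum_(1 <= j < h.+1) exp_nodes h p j <= C *+ h.
  have : \sum_(1 <= j < h.+1) exp_nodes h p j <= \sum_(1 <= j < h.+1) C.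
    apply: ler_sum_nat => j /andP[j1 jh].
    by apply: bC; rewrite j1 -ltnS.
  by rewrite sumr_const_nat subSS subn0.
have -> : (2 * (h - kstar))%:R = 2 * K :> R by rewrite natrM.
have Sh : C *+ h = h%:R * C by rewrite mulr_natl.
rewrite Sh in S.
have : 2 * K * \sum_(1 <= j < h.+1) exp_nodes h p j <= 2 * K * (h%:R * C).
  by rewrite ler_pM2l // mulr_gt0.
have -> : 2 * K * (h%:R * C) = 2 * h%:R * entropy p * 2 ^+ h + 6 * h%:R * K.
  rewrite /C; field; by rewrite gt_eqF.
have : 6 * h%:R * K <= 6 * (h ^ 2)%:R.
  rewrite natrX expr2 -mulrA ler_pM2l; last lra.
  by apply: ler_wpM2l.
lra.
Qed.
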